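(* Let $m\ge3$, $\Lambda\in\mathbb{R}$, and let $u:(\mathbb{R}^m\setminus\{0\})\times(-\infty,\Lambda)\to\mathbb{R}$ be a solution of the heat equation $\partial_tu=\Delta u$ with respect to the Euclidean metric. Suppose there exist $C>0$ and $0<\nu<m-2$ with $|\nabla^\ell u(x,t)|\le C|x|^{-\nu-\ell}$ for all $x\neq0$, $t\in(-\infty,\Lambda)$ and $\ell\in\{0,1,2\}$. Then $u\equiv0$. *)

(* Defs.v *)
From HB Require Import structures.
From mathcomp Require Import all_boot all_order all_algebra.
From mathcomp Require Import all_classical all_reals all_analysis.
Set Implicit Arguments. Unset Strict Implicit. Unset Printing Implicit Defensive.
Import Order.TTheory GRing.Theory Num.Theory numFieldNormedType.Exports.
Local Open Scope ring_scope.

Section Heat.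
Context {R : realType} {m : nat}.

Definition evec (i : 'I_m) : 'rV[R]_m := delta_mx 0 i.

Definition enorm (x : 'rV[R]_m) : R := Num.sqrt (\sum_i x 0 i ^+ 2).

Definition dx (u : 'rV[R]_m -> R -> R) (i : 'I_m) : 'rV[R]_m -> R -> R :=
  fun x t => 'D_(evec i) (fun y => u y t) x.

Definition dt (u : 'rV[R]_m -> R -> R) : 'rV[R]_m -> R -> R :=
  fun x t => derive1 (u x) t.

Definition laplacian (u : 'rV[R]_m -> R -> R) x t : R :=
  \sum_i dx (dx u i) i x t.

Definition grad_norm (u : 'rV[R]_m -> R -> R) x t : R :=
  Num.sqrt (\sum_i dx u i x t ^+ 2).
Definition hess_norm (u : 'rV[R]_m -> R -> R) x t : R :=
  Num.sqrt (\sum_i \sum_j dx (dx u j) i x t ^+ 2).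

Definition uncurry2 (f : 'rV[R]_m -> R -> R) : 'rV[R]_m * R -> R :=
  fun p => f p.1 p.2.

Definition heat_solution (Lam : R) (u : 'rV[R]_m -> R -> R) : Prop :=
  forall x t, x != 0 -> t < Lam ->
  [/\ forall i, derivable (fun y => u y t) x (evec i),
      forall i j, derivable (fun y => dx u j y t) x (evec i),
      derivable (u x) t 1,
      [/\ {for (x, t), continuous (uncurry2 u)},
          forall i, {for (x, t), continuous (uncurry2 (dx u i))},
          forall i j, {for (x, t), continuous (uncurry2 (dx (dx u j) i))} &
          {for (x, t), continuous (uncurry2 (dt u))}] &
      dt u x t = laplacian u x t].

End Heat.

(* Main.v *)
Require Import Defs.
From HB Require Import structures.
From mathcomp Require Import all_boot all_order all_algebra.
From mathcomp Require Import all_classical all_reals all_analysis.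
From mathcomp Require Import ring lra.
Set Implicit Arguments. Unset Strict Implicit. Unset Printing Implicit Defensive.
Import Order.TTheory GRing.Theory Num.Theory numFieldNormedType.Exports.
Local Open Scope ring_scope.
Local Open Scope classical_set_scope.
Lemma near0P (R : realType) (P : R -> Prop) :
  (\forall h \near 0^', P h) -> exists2 e : R, 0 < e & forall h, h != 0 -> `|h| < e -> P h.
Proof.
move=> /nbhs_ballP[e e0 He]; exists e => // h h0 he; apply: He => //.
by rewrite /ball /= sub0r normrN.
Qed.

Lemma d2_max (R : realType) (f df : R -> R) (a d : R) :
  0 < d -> (forall h : R, `|h| < d -> is_derive h (1:R) f (df h)) ->
  is_derive (0:R) (1:R) df a -> (forall h, `|h| < d -> f h <= f 0) -> a <= 0.
Proof.
move=> d0 fd [dfd dfa] fmax.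
have itv h : h \in `]-d, d[%R -> `|h| < d by rewrite in_itv /= -ltr_norml.
have df0 : df 0 = 0.
  have := @derive1_at_max R f (-d) d 0.
  case.
  - lra.
  - by move=> t /itv /fd [].
  - by rewrite in_itv /= oppr_lt0 d0.
  - by move=> t /itv /fmax.
  move=> _ H0; have [_ <-] := fd 0 ltac:(by rewrite normr0).
  by rewrite H0.
rewrite leNgt; apply/negP => a0.
have q : (fun h : R => h^-1 *: ((df \o shift 0) (h *: 1) - df 0)) @ 0^' --> 'D_1 df 0 := dfd.
rewrite dfa in q.
have /near0P[e e0 He] := cvgr_gt _ q (a / 2) ltac:(by rewrite ltr_pdivrMr // ltr_pMr // ltr1n).
have me : Num.min e d <= e by rewrite ge_min lexx.
have md : Num.min e d <= d by rewrite ge_min lexx orbT.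
pose h0 := Num.min e d / 2.
have h00 : 0 < h0 by rewrite divr_gt0 // lt_min e0 d0.
have h0e : h0 < Num.min e d by rewrite ltr_pdivrMr // ltr_pMr ?ltr1n // lt_min e0 d0.
have dpos c : c \in `]0, h0[%R -> 0 < df c.
  rewrite in_itv /= => /andP[c0 ch].
  have := He c (lt0r_neq0 c0) _.
  rewrite gtr0_norm // (lt_trans ch (lt_le_trans h0e me)) => /(_ isT).
  rewrite /= df0 subr0 /shift /= addr0 [c%:A]mulr1.
  idtac.
  move=> H; have : 0 < c^-1 * df c by apply: lt_trans H; rewrite divr_gt0 // ltr0n.
  by rewrite pmulr_rgt0 // invr_gt0.
have hd : `|h0| < d by rewrite gtr0_norm // (lt_le_trans h0e md).
have H1 : forall x, x \in `]0, h0[%R -> is_derive x (1:R) f (df x).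
  move=> x; rewrite in_itv /= => /andP[x0 xh]; apply: fd.
  by rewrite gtr0_norm // (lt_trans xh (lt_le_trans h0e md)).
have H2 : {within `[0, h0], continuous f}.
  apply: continuous_in_subspaceT => x; rewrite inE /= in_itv /= => /andP[x0 xh].
  have [dd _] := fd x ltac:(by rewrite ger0_norm // (le_lt_trans xh (lt_le_trans h0e md))).
  exact/differentiable_continuous/derivable1_diffP.
have [c cin Hc] := @MVT R f df 0 h0 h00 H1 H2.
move: (fmax h0 hd); rewrite -subr_le0 Hc subr0 => /le_lt_trans /(_ (mulr_gt0 (dpos c cin) h00)).
by rewrite ltxx.
Qed.

Lemma d1_leftmax (R : realType) (f : R -> R) (b s d : R) :
  0 < d -> is_derive s (1:R) f b ->
  (forall t, s - d < t -> t <= s -> f t <= f s) -> 0 <= b.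
Proof.
move=> d0 [fd fb] fmax.
have q : (fun h : R => h^-1 *: ((f \o shift s) (h *: 1) - f s)) @ 0^' --> 'D_1 f s := fd.
rewrite fb in q.
rewrite leNgt; apply/negP => b0.
have /near0P[e e0 He] := cvgr_lt _ q (b / 2) ltac:(lra).
have me : Num.min e d <= e by rewrite ge_min lexx.
have md : Num.min e d <= d by rewrite ge_min lexx orbT.
pose h0 := - (Num.min e d / 2).
have h00 : h0 < 0 by rewrite oppr_lt0 divr_gt0 // lt_min e0 d0.
have h0e : Num.min e d / 2 < Num.min e d by rewrite ltr_pdivrMr // ltr_pMr ?ltr1n // lt_min e0 d0.
have := He h0 (ltr0_neq0 h00) _.
rewrite ltr0_norm // opprK (lt_le_trans h0e me) => /(_ isT).
rewrite /= /shift /= [h0%:A]mulr1.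
have : f (h0 + s) <= f s.
  apply: fmax; last by move: h00; lra.
  rewrite /h0; move: h0e md; lra.
rewrite -subr_le0 => H1 H2.
have : 0 <= h0^-1 * (f (h0 + s) - f s) by rewrite mulr_le0 // invr_le0 ltW.
move=> H3; move: H2; rewrite /GRing.scale /= => H2; move: H3 H2 b0; lra.
Qed.

Lemma line_is_derive (R : realType) m (g : 'rV[R]_m -> R) (x e : 'rV[R]_m) (h0 : R) :
  derivable g (x + h0 *: e) e ->
  is_derive h0 (1:R) (fun h => g (x + h *: e)) ('D_e g (x + h0 *: e)).
Proof.
have E : (fun h : R => h^-1 *: (((fun h => g (x + h *: e)) \o shift h0) (h *: 1) - g (x + h0 *: e)))
  = (fun h : R => h^-1 *: ((g \o shift (x + h0 *: e)) (h *: e) - g (x + h0 *: e))).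
  apply/funext => h /=; congr (_ *: (g _ - _)).
  by rewrite /shift /= [h *: 1]mulr1 scalerDl addrCA addrC.
move=> D; split; first by rewrite /derivable E.
by rewrite /derive E.
Qed.
Definition rho (R : realType) m (x : 'rV[R]_m) : R := \sum_i x 0 i ^+ 2.

Lemma rho_ge0 (R : realType) m (x : 'rV[R]_m) : 0 <= rho x.
Proof. by rewrite /rho sumr_ge0 // => i _; rewrite sqr_ge0. Qed.

Lemma rho0 (R : realType) m : rho (0 : 'rV[R]_m) = 0.
Proof. by rewrite /rho big1 // => i _; rewrite mxE expr0n. Qed.

Lemma coord_le_rho (R : realType) m (x : 'rV[R]_m) i : x 0 i ^+ 2 <= rho x.
Proof.
rewrite /rho (bigD1 i) //= lerDl sumr_ge0 // => j _; exact: sqr_ge0.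
Qed.

Lemma rho_line (R : realType) m (x : 'rV[R]_m) i (h : R) :
  rho (x + h *: delta_mx 0 i) = rho x + 2 * h * x 0 i + h ^+ 2.
Proof.
rewrite /rho (bigD1 i) //= [in RHS](bigD1 i) //=.
rewrite (eq_bigr (fun j => x 0 j ^+ 2)); last first.
  by move=> j /negbTE ji; rewrite !mxE ji /= mulr0 addr0.
rewrite !mxE !eqxx /= mulr1; ring.
Qed.

Definition W2 (R : realType) (A p c b : R) :=
  A * p * ((p - 1) * c `^ (p - 2) * 4 * b ^+ 2 + 2 * c `^ (p - 1)).

Lemma sum_W2 (R : realType) m (x : 'rV[R]_m) (A p c : R) :
  \sum_i W2 A p c (x 0 i) =
  A * p * ((p - 1) * c `^ (p - 2) * 4 * rho x + m%:R * 2 * c `^ (p - 1)).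
Proof.
rewrite /W2 -mulr_sumr big_split /= -mulr_sumr sumr_const card_ord.
by rewrite /rho -mulr_natl; ring.
Qed.

Lemma W2_term_le (R : realType) (m : nat) (A p K c rh : R) :
  0 <= A -> p <= 0 -> 0 <= K -> 4 * (1 - p) <= 2 * m%:R - K ->
  0 <= rh -> rh <= c -> 0 < c ->
  A * p * ((p - 1) * c `^ (p - 2) * 4 * rh + m%:R * 2 * c `^ (p - 1))
  <= A * p * c `^ (p - 1) * K.
Proof.
move=> A0 p0 K0 hK rh0 rhc c0.
have E : c `^ (p - 1) = c `^ (p - 2) * c.
  rewrite -{3}(powRr1 (ltW c0)) -powRD; last by apply/implyP => _; rewrite gt_eqF.
  by congr (_ `^ _); ring.
rewrite E.
set al := c `^ (p - 2).
have al0 : 0 <= al by apply: powR_ge0.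
have Ap : A * p <= 0 by rewrite mulr_ge0_le0.
have br : 0 <= 4 * (p - 1) * rh + (2 * m%:R - K) * c.
  have : 0 <= (2 * m%:R - K - 4 * (1 - p)) * c by rewrite mulr_ge0 // ?subr_ge0 // ltW.
  have : 0 <= 4 * (1 - p) * (c - rh) by rewrite mulr_ge0 // ?subr_ge0 //; lra.
  lra.
rewrite -subr_ge0.
have -> : A * p * (al * c) * K - A * p * ((p - 1) * al * 4 * rh + m%:R * 2 * (al * c))
  = - (A * p) * (al * (4 * (p - 1) * rh + (2 * m%:R - K) * c)) by ring.
by rewrite mulr_ge0 // ?oppr_ge0 // mulr_ge0.
Qed.
Lemma quad_is_derive (R : realType) (c b h : R) :
  is_derive h (1:R) (fun h => c + 2 * h * b + h ^+ 2) (2 * b + 2 * h).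
Proof.
have H := is_deriveD (is_deriveD (is_derive_cst c h (1:R))
   (is_deriveZ (2 * b) (is_derive_id h (1:R)))) (is_deriveX 2 (is_derive_id h (1:R))).
have E : (fun h : R => c + 2 * h * b + h ^+ 2) = (cst c + (2 * b) \*: id + id ^+ 2).
  apply/funext => x; rewrite !fctE /= /GRing.scale /=; ring.
rewrite E; apply: is_derive_eq H _.
rewrite /GRing.scale /= !mulr1; ring.
Qed.

Lemma powquad_is_derive (R : realType) (A p c b h : R) :
  0 < c + 2 * h * b + h ^+ 2 ->
  is_derive h (1:R) (fun h => A * (c + 2 * h * b + h ^+ 2) `^ p)
    (A * p * (c + 2 * h * b + h ^+ 2) `^ (p - 1) * (2 * b + 2 * h)).
Proof.
move=> Q0.
have H1 := @is_derive1_comp R (@powR R ^~ p) (fun h => c + 2 * h * b + h ^+ 2) h _ _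
   (is_derive1_powR p Q0) (quad_is_derive c b h).
have H := is_deriveZ A H1.
have E : (fun h => A * (c + 2 * h * b + h ^+ 2) `^ p) =
  A \*: ((@powR R ^~ p) \o (fun h => c + 2 * h * b + h ^+ 2)) by apply/funext => x.
rewrite E; apply: is_derive_eq H _.
by rewrite /GRing.scale /= !mulrA.
Qed.

Lemma powquad_d2 (R : realType) (A p c b h : R) :
  0 < c + 2 * h * b + h ^+ 2 ->
  is_derive h (1:R) (fun h => A * p * (c + 2 * h * b + h ^+ 2) `^ (p - 1) * (2 * b + 2 * h))
    (A * p * ((p - 1) * (c + 2 * h * b + h ^+ 2) `^ (p - 1 - 1) * (2 * b + 2 * h) ^+ 2
              + 2 * (c + 2 * h * b + h ^+ 2) `^ (p - 1))).
Proof.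
move=> Q0.
have H1 := powquad_is_derive (A * p) (p - 1) Q0.
have H2 := is_deriveD (is_derive_cst (2 * b) h (1:R)) (is_deriveZ 2 (is_derive_id h (1:R))).
have H := is_deriveM H1 H2.
have E : (fun h => A * p * (c + 2 * h * b + h ^+ 2) `^ (p - 1) * (2 * b + 2 * h)) =
  (fun h => A * p * (c + 2 * h * b + h ^+ 2) `^ (p - 1)) * (cst (2 * b) + 2 \*: id).
  by apply/funext => x; rewrite !fctE /GRing.scale /=.
rewrite E; apply: is_derive_eq H _.
rewrite !fctE /GRing.scale /= !mulr1 add0r.
rewrite [2 *: h]/GRing.scale /=; ring.
Qed.
Lemma powquad_d2_0 (R : realType) (A p c b : R) : 0 < c ->
  is_derive (0:R) (1:R) (fun h => A * p * (c + 2 * h * b + h ^+ 2) `^ (p - 1) * (2 * b + 2 * h))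
    (W2 A p c b).
Proof.
move=> c0.
have c0' : 0 < c + 2 * 0 * b + 0 ^+ 2 by rewrite mulr0 mul0r addr0 expr0n addr0.
apply: is_derive_eq (powquad_d2 A p c0') _.
rewrite /W2 mulr0 mul0r !addr0 expr0n /= addr0.
have -> : p - 1 - 1 = p - 2 by ring.
ring.
Qed.

Definition Wb (R : realType) m (A p K t0 B q M eta : R) (y : 'rV[R]_m) (tau : R) : R :=
  A * (rho y + K * (tau - t0)) `^ p + B * rho y `^ q + M + eta * (tau - t0).

Lemma Wb_line (R : realType) m (A p K t0 B q M eta : R) (x : 'rV[R]_m) i s (h : R) :
  Wb A p K t0 B q M eta (x + h *: evec i) s =
  A * ((rho x + K * (s - t0)) + 2 * h * x 0 i + h ^+ 2) `^ p +
  B * (rho x + 2 * h * x 0 i + h ^+ 2) `^ q + (M + eta * (s - t0)).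
Proof.
rewrite /Wb /evec rho_line.
have -> : rho x + 2 * h * x 0 i + h ^+ 2 + K * (s - t0) =
  rho x + K * (s - t0) + 2 * h * x 0 i + h ^+ 2 by ring.
ring.
Qed.

Lemma Wb_line_is_derive (R : realType) m (A p K t0 B q M eta : R) (x : 'rV[R]_m) i s (h : R) :
  0 <= K * (s - t0) -> 0 < rho (x + h *: evec i) ->
  is_derive h (1:R) (fun h => Wb A p K t0 B q M eta (x + h *: evec i) s)
   (A * p * ((rho x + K * (s - t0)) + 2 * h * x 0 i + h ^+ 2) `^ (p - 1) * (2 * x 0 i + 2 * h) +
    B * q * (rho x + 2 * h * x 0 i + h ^+ 2) `^ (q - 1) * (2 * x 0 i + 2 * h)).
Proof.
move=> Ks rp.
rewrite /evec rho_line in rp.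
have E : (fun h => Wb A p K t0 B q M eta (x + h *: evec i) s) =
  (fun h => A * ((rho x + K * (s - t0)) + 2 * h * x 0 i + h ^+ 2) `^ p) +
  (fun h => B * (rho x + 2 * h * x 0 i + h ^+ 2) `^ q) + cst (M + eta * (s - t0)).
  by apply/funext => y; rewrite Wb_line.
rewrite E.
have p1 : 0 < rho x + K * (s - t0) + 2 * h * x 0 i + h ^+ 2.
  by move: rp Ks; lra.
apply: is_derive_eq (is_deriveD (is_deriveD (powquad_is_derive A p p1) (powquad_is_derive B q rp))
   (is_derive_cst _ _ _)) _.
by rewrite addr0.
Qed.

Lemma Wd_is_derive0 (R : realType) m (A p K t0 B q : R) (x : 'rV[R]_m) i s :
  0 < rho x + K * (s - t0) -> 0 < rho x ->
  is_derive (0:R) (1:R) (fun h =>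
    A * p * ((rho x + K * (s - t0)) + 2 * h * x 0 i + h ^+ 2) `^ (p - 1) * (2 * x 0 i + 2 * h) +
    B * q * (rho x + 2 * h * x 0 i + h ^+ 2) `^ (q - 1) * (2 * x 0 i + 2 * h))
   (W2 A p (rho x + K * (s - t0)) (x 0 i) + W2 B q (rho x) (x 0 i)).
Proof.
move=> c1 c2.
exact: (is_deriveD (powquad_d2_0 A p (x 0 i) c1) (powquad_d2_0 B q (x 0 i) c2)).
Qed.

Lemma Wb_time_is_derive (R : realType) m (A p K t0 B q M eta : R) (x : 'rV[R]_m) s :
  0 < rho x + K * (s - t0) ->
  is_derive s (1:R) (fun tau => Wb A p K t0 B q M eta x tau)
    (A * p * (rho x + K * (s - t0)) `^ (p - 1) * K + eta).
Proof.
move=> c1.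
have Haff := is_deriveD (is_derive_cst (rho x - K * t0) s (1:R)) (is_deriveZ K (is_derive_id s (1:R))).
have E1 : (cst (rho x - K * t0) + K \*: id) = (fun tau => rho x + K * (tau - t0)).
  apply/funext => y; rewrite !fctE; change (rho x - K * t0 + K * y = rho x + K * (y - t0)); ring.
rewrite E1 in Haff.
have c1' : 0 < rho x + K * (s - t0) by [].
have H1 := @is_derive1_comp R (@powR R ^~ p) (fun tau => rho x + K * (tau - t0)) s _ _
   (is_derive1_powR p c1') Haff.
have H2 := is_deriveZ A H1.
have Hl := is_deriveD (is_deriveZ eta (is_derive_id s (1:R))) (is_derive_cst (- eta * t0) s (1:R)).
have E : (fun tau => Wb A p K t0 B q M eta x tau) =
  A \*: ((@powR R ^~ p) \o (fun tau => rho x + K * (tau - t0))) + cst (B * rho x `^ q + M)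
  + (eta \*: id + cst (- eta * t0)).
  apply/funext => y; rewrite /Wb !fctE; change (A * (rho x + K*(y-t0)) `^ p + B * rho x `^ q + M + eta*(y - t0) = A * (rho x + K*(y-t0)) `^ p + (B * rho x `^ q + M) + (eta * y + - eta * t0)); ring.
rewrite E.
apply: is_derive_eq (is_deriveD (is_deriveD H2 (is_derive_cst _ _ _)) Hl) _.
rewrite /GRing.scale /= !mulr1 !addr0 add0r; ring.
Qed.
Lemma small_pert (R : realType) (b h g : R) : 0 < g ->
  `|h| < Num.min 1 (g / (2 * `|b| + 1)) -> `|2 * h * b + h ^+ 2| < g.
Proof.
move=> g0; rewrite lt_min => /andP[h1 hg].
have b0 : 0 <= `|b| by [].
have d0 : 0 < 2 * `|b| + 1 by move: b0; lra.
rewrite ltr_pdivlMr // in hg.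
apply: le_lt_trans (ler_normD _ _) _.
rewrite !normrM (ger0_norm (_ : 0 <= 2)) //.
have a0 : 0 <= `|h| by [].
have : `|h| * `|h| <= `|h| by rewrite ler_piMl // ltW.
move: hg; nra.
Qed.

Lemma interior_contra (R : realType) (m : nat) (Lam : R) (u : 'rV[R]_m -> R -> R)
  (sg A p K t0 B q M eta r2 R2 t1 : R) (x : 'rV[R]_m) (s : R) :
  heat_solution Lam u ->
  0 <= A -> p <= 0 -> 0 <= K -> 4 * (1 - p) <= 2 * m%:R - K ->
  0 <= B -> q <= 0 -> 4 * (1 - q) <= 2 * m%:R - 0 ->
  0 < eta -> 0 < r2 -> t1 < Lam ->
  r2 < rho x -> rho x < R2 -> t0 < s -> s <= t1 ->
  (forall y tau, r2 <= rho y -> rho y <= R2 -> t0 <= tau -> tau <= t1 ->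
     sg * u y tau - Wb A p K t0 B q M eta y tau <= sg * u x s - Wb A p K t0 B q M eta x s) ->
  False.
Proof.
move=> Hh A0 p0 K0 hK B0 q0 hq e0 r20 t1L xr xR t0s st1 Hmax.
have rx0 : 0 < rho x by apply: lt_trans xr.
have x0 : x != 0 by apply/eqP => E; move: rx0; rewrite E rho0 ltxx.
have sL : s < Lam by apply: le_lt_trans t1L.
have Ks : 0 <= K * (s - t0) by rewrite mulr_ge0 // subr_ge0 ltW.
have c1p : 0 < rho x + K * (s - t0) by move: rx0 Ks; lra.
have [Hd1 Hd2 Hdt _ Heq] := Hh x s x0 sL.
have Hsp : forall i, sg * dx (dx u i) i x s <=
    W2 A p (rho x + K * (s - t0)) (x 0 i) + W2 B q (rho x) (x 0 i).
  move=> i.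
  pose g := Num.min (rho x - r2) (R2 - rho x).
  have g0 : 0 < g by rewrite lt_min !subr_gt0 xr xR.
  have g1 : g <= rho x - r2 by rewrite ge_min lexx.
  have g2 : g <= R2 - rho x by rewrite ge_min lexx orbT.
  pose d := Num.min 1 (g / (2 * `|x 0 i| + 1)).
  have d0 : 0 < d.
    rewrite lt_min ltr01 divr_gt0 //.
  have hnear h : `|h| < d -> r2 < rho (x + h *: evec i) /\ rho (x + h *: evec i) < R2.
    move=> hd; have := small_pert g0 hd; rewrite /evec rho_line ltr_norml.
    case/andP; move: g1 g2; lra.
  pose f := (sg \*: (fun h : R => u (x + h *: evec i) s)) - (fun h => Wb A p K t0 B q M eta (x + h *: evec i) s).
  pose df := (sg \*: (fun h : R => dx u i (x + h *: evec i) s)) - (fun h =>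
    A * p * ((rho x + K * (s - t0)) + 2 * h * x 0 i + h ^+ 2) `^ (p - 1) * (2 * x 0 i + 2 * h) +
    B * q * (rho x + 2 * h * x 0 i + h ^+ 2) `^ (q - 1) * (2 * x 0 i + 2 * h)).
  suff Ha : sg * dx (dx u i) i x s -
      (W2 A p (rho x + K * (s - t0)) (x 0 i) + W2 B q (rho x) (x 0 i)) <= 0.
    by rewrite subr_le0 in Ha.
  apply: (@d2_max R f df _ d d0).
  - move=> h hd; have [r2y yR] := hnear h hd.
    have y0 : x + h *: evec i != 0.
      by apply/eqP => E; move: r2y; rewrite E rho0 => /lt_trans /(_ r20); rewrite ltxx.
    have [Hy1 _ _ _ _] := Hh _ s y0 sL.
    have Hu := line_is_derive (Hy1 i).
    exact: (is_deriveB (is_deriveZ sg Hu) (Wb_line_is_derive A p B q M eta Ks (lt_trans r20 r2y))).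
  - have Hu2 : is_derive (0:R) (1:R) (fun h => dx u i (x + h *: evec i) s) (dx (dx u i) i x s).
      have Hd : derivable (fun y => dx u i y s) (x + 0 *: evec i) (evec i).
        by rewrite scale0r addr0; exact: Hd2.
      have := line_is_derive Hd; rewrite scale0r addr0 => H; exact: H.
    exact: (is_deriveB (is_deriveZ sg Hu2) (Wd_is_derive0 A p B q i c1p rx0)).
  - move=> h hd; have [r2y yR] := hnear h hd.
    rewrite /f !fctE scale0r addr0.
    change (sg * u (x + h *: evec i) s - Wb A p K t0 B q M eta (x + h *: evec i) s <= sg * u (x + 0 *: evec i) s - Wb A p K t0 B q M eta x s).
    rewrite scale0r addr0; apply: Hmax; [exact: ltW r2y| exact: ltW yR| exact: ltW t0s| exact: st1].
have Ht : A * p * (rho x + K * (s - t0)) `^ (p - 1) * K + eta <= sg * dt u x s.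
  pose k := (sg \*: u x) - (fun tau => Wb A p K t0 B q M eta x tau).
  have Hu : is_derive s (1:R) (u x) (dt u x s) by rewrite /dt derive1E; exact: derivableP.
  suff Hb : 0 <= sg * dt u x s - (A * p * (rho x + K * (s - t0)) `^ (p - 1) * K + eta).
    by rewrite subr_ge0 in Hb.
  apply: (@d1_leftmax R k _ s (s - t0)).
  - by rewrite subr_gt0.
  - exact: (is_deriveB (is_deriveZ sg Hu) (Wb_time_is_derive A p B q M eta c1p)).
  - move=> tau h1 h2.
    change (sg * u x tau - Wb A p K t0 B q M eta x tau <= sg * u x s - Wb A p K t0 B q M eta x s).
    apply: Hmax; [exact: ltW xr | exact: ltW xR | move: h1; lra | move: h2 st1; lra].
have Hsum : sg * laplacian u x s <= A * p * (rho x + K * (s - t0)) `^ (p - 1) * K.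
  rewrite /laplacian mulr_sumr.
  apply: le_trans (ler_sum _ (fun i _ => Hsp i)) _.
  rewrite big_split /= !sum_W2.
  have rc : rho x <= rho x + K * (s - t0) by rewrite lerDl.
  have T1 := W2_term_le A0 p0 K0 hK (rho_ge0 x) rc c1p.
  have T2 := W2_term_le B0 q0 (lexx 0) hq (rho_ge0 x) (lexx _) rx0.
  rewrite mulr0 in T2.
  move: T1 T2; lra.
move: Ht Hsum; rewrite Heq; lra.
Qed.
Lemma rho_cont (R : realType) m : continuous (@rho R m).
Proof.
have -> : @rho R m = \sum_i (fun y : 'rV[R]_m => y 0 i ^+ 2).
  by rewrite fct_sumE; apply/funext => y.
elim/big_ind: _.
- by move=> x; exact: cst_continuous.
- move=> f g cf cg x; exact: (continuousD (cf x) (cg x)).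
move=> i _ x.
have H := continuousM (@coord_continuous R 1 m 0 i x) (@coord_continuous R 1 m 0 i x).
have -> : (fun y : 'rV[R]_m => y 0 i ^+ 2) = (fun y : 'rV[R]_m => y 0 i) \* (fun y => y 0 i).
  by apply/funext => y; rewrite expr2.
exact: H.
Qed.

Lemma powR_cont (R : realType) (p c : R) : 0 < c -> {for c, continuous (@powR R ^~ p)}.
Proof.
move=> c0; apply: differentiable_continuous; apply/derivable1_diffP.
by apply: derivable_powR; rewrite in_itv /= andbT.
Qed.

Lemma Wb_cont (R : realType) m (A p K t0 B q M eta : R) (z : 'rV[R]_m * R) :
  0 < rho z.1 + K * (z.2 - t0) -> 0 < rho z.1 ->
  {for z, continuous (fun z => Wb A p K t0 B q M eta z.1 z.2)}.
Proof.
move=> c1 c2.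
have Hf : {for z, continuous (fun z : 'rV[R]_m * R => rho z.1)}.
  apply: (continuous_comp (f := fst)); first exact: cvg_fst.
  exact: rho_cont.
have Hs : {for z, continuous (fun z : 'rV[R]_m * R => z.2)} by exact: cvg_snd.
have Hc (k : R) : {for z, continuous (fun _ : 'rV[R]_m * R => k)} by exact: cst_continuous.
have Haff : {for z, continuous (fun z : 'rV[R]_m * R => rho z.1 + K * (z.2 - t0))}.
  exact: (continuousD Hf (continuousM (Hc K) (continuousB Hs (Hc t0)))).
have H1 : {for z, continuous (fun z : 'rV[R]_m * R => A * (rho z.1 + K * (z.2 - t0)) `^ p)}.
  apply: (continuousM (Hc A)).
  exact: (continuous_comp Haff (powR_cont (p:=p) c1)).
have H2 : {for z, continuous (fun z : 'rV[R]_m * R => B * rho z.1 `^ q)}.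
  apply: (continuousM (Hc B)).
  exact: (continuous_comp Hf (powR_cont (p:=q) c2)).
exact: (continuousD (continuousD (continuousD H1 H2) (Hc M)) (continuousM (Hc eta) (continuousB Hs (Hc t0)))).
Qed.

Lemma ann_compact (R : realType) m (r2 R2 : R) :
  compact [set y : 'rV[R]_m | r2 <= rho y <= R2].
Proof.
apply: (@subclosed_compact _ _ [set v : 'rV[R]_m | forall i, `[-(R2 + 1), R2 + 1]%classic (v ord0 i)]).
- have -> : [set y : 'rV[R]_m | r2 <= rho y <= R2] = (@rho R m) @^-1` [set x : R^o | x \in `[r2, R2]%R].
    by apply/seteqP; split => y /=; rewrite in_itv.
  apply: preimage_closed; first by move=> y _; exact: rho_cont.
  exact: interval_closed.
- by apply: (@rV_compact _ _ (fun=> `[-(R2 + 1), R2 + 1]%classic)) => _; exact: segment_compact.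
- move=> y /andP[_ yR] i /=; rewrite in_itv /=.
  have := coord_le_rho y i; rewrite (_ : ord0 = 0) // => H.
  apply/andP; split; nra.
Qed.

Lemma maxprin (R : realType) (m : nat) (Lam : R) (u : 'rV[R]_m -> R -> R)
  (sg A p K t0 B q M eta r2 R2 t1 : R) :
  heat_solution Lam u ->
  0 <= A -> p <= 0 -> 0 <= K -> 4 * (1 - p) <= 2 * m%:R - K ->
  0 <= B -> q <= 0 -> 4 * (1 - q) <= 2 * m%:R - 0 ->
  0 < eta -> 0 < r2 -> t1 < Lam ->
  (forall y tau, r2 <= rho y -> rho y <= R2 -> t0 <= tau -> tau <= t1 ->
     (rho y = r2 \/ rho y = R2 \/ tau = t0) -> sg * u y tau <= Wb A p K t0 B q M eta y tau) ->
  forall y tau, r2 <= rho y -> rho y <= R2 -> t0 <= tau -> tau <= t1 ->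
     sg * u y tau <= Wb A p K t0 B q M eta y tau.
Proof.
move=> Hh A0 p0 K0 hK B0 q0 hq e0 r20 t1L Hbd y tau y1 y2 t0t tt1.
pose S := [set y : 'rV[R]_m | r2 <= rho y <= R2] `*` [set` `[t0, t1]%R].
pose v := fun z : 'rV[R]_m * R => sg * u z.1 z.2 - Wb A p K t0 B q M eta z.1 z.2.
have memS z : S z <-> [/\ r2 <= rho z.1, rho z.1 <= R2, t0 <= z.2 & z.2 <= t1].
  rewrite /S /=; split.
    by move=> [/andP[-> ->]]; rewrite /= in_itv /= => /andP[-> ->].
  by move=> [-> -> h3 h4]; split => //; rewrite /= in_itv /= h3 h4.
have yS : S (y, tau) by apply/memS.
have Sc : compact S := compact_setX (@ann_compact R m r2 R2) (@segment_compact R t0 t1).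
have vc : {within S, continuous v}.
  apply: continuous_in_subspaceT => -[x t]; rewrite inE => /memS [/= z1 z2 z3 z4].
  have rx0 : 0 < rho x by apply: lt_le_trans z1.
  have x0 : x != 0 by apply/eqP => E; move: rx0; rewrite E rho0 ltxx.
  have tL : t < Lam by apply: le_lt_trans t1L.
  have [_ _ _ [Hu _ _ _] _] := Hh x t x0 tL.
  have c1 : 0 < rho (x, t).1 + K * ((x, t).2 - t0).
    have : 0 <= K * (t - t0) by rewrite mulr_ge0 // subr_ge0.
    rewrite /=; move: rx0; lra.
  have Hc : {for (x, t), continuous (fun _ : 'rV[R]_m * R => sg)} by exact: cst_continuous.
  have H1 := continuousM Hc Hu.
  have H2 := Wb_cont (A:=A) (p:=p) (B:=B) (q:=q) (M:=M) (eta:=eta) c1 rx0.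
  have H3 := continuousB H1 H2.
  exact: H3.
have [c cS cmax] := compact_EVT_max (ex_intro _ _ yS) Sc vc.
have vc0 : v c <= 0.
  move: cS cmax; case: c => [x s]; rewrite inE => /memS [/= x1 x2 s1 s2] cmax.
  have [bd|nbd] := pselect (rho x = r2 \/ rho x = R2 \/ s = t0).
    by rewrite /v /= subr_le0; apply: Hbd.
  exfalso.
  apply: (@interior_contra R m Lam u sg A p K t0 B q M eta r2 R2 t1 x s Hh A0 p0 K0 hK B0 q0 hq e0 r20 t1L).
  - by rewrite lt_neqAle x1 andbT; apply/eqP => E; apply: nbd; left; rewrite E.
  - by rewrite lt_neqAle x2 andbT; apply/eqP => E; apply: nbd; right; left.
  - by rewrite lt_neqAle s1 andbT; apply/eqP => E; apply: nbd; right; right; rewrite E.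
  - exact: s2.
  - move=> y' tau' h1 h2 h3 h4.
    have := cmax (y', tau'); rewrite inE => /(_ (proj2 (memS (y', tau')) (And4 h1 h2 h3 h4))).
    by [].
have := cmax (y, tau); rewrite inE => /(_ yS).
rewrite /v /= => H; move: H vc0; rewrite /v; lra.
Qed.
Lemma powR_anti (R : realType) (p a b : R) : p <= 0 -> 0 < a -> a <= b -> b `^ p <= a `^ p.
Proof.
move=> p0 a0 ab.
have b0 : 0 < b by apply: lt_le_trans ab.
have H : a `^ (- p) <= b `^ (- p).
  by apply: ge0_ler_powR; rewrite ?nnegrE ?oppr_ge0 // ltW.
have E x : x `^ p = (x `^ (- p))^-1 by rewrite -powRN opprK.
by rewrite !E lef_pV2 ?posrE ?powR_gt0.
Qed.

Lemma enorm_powR (R : realType) m (y : 'rV[R]_m) (a : R) :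
  enorm y `^ a = rho y `^ (2^-1 * a).
Proof. by rewrite powRrM powR12_sqrt // rho_ge0. Qed.

Lemma powR_inv_pow (R : realType) (c w : R) : 0 < c -> w != 0 -> (c `^ w^-1) `^ w = c.
Proof. by move=> c0 w0; rewrite -powRrM mulVf // powRr1 // ltW. Qed.

Lemma rho_gt0 (R : realType) m (x : 'rV[R]_m) : x != 0 -> 0 < rho x.
Proof.
move=> x0; rewrite lt_def rho_ge0 andbT; apply: contra x0 => /eqP r0.
apply/eqP/matrixP => i j; rewrite (ord1 i) mxE.
have := coord_le_rho x j; rewrite r0 => H.
by apply/eqP; rewrite -sqrf_eq0 eq_le H sqr_ge0.
Qed.

Lemma sg_bound (R : realType) (m : nat) (Lam : R) (u : 'rV[R]_m -> R -> R) (C nu sg : R)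
  (x : 'rV[R]_m) (t : R) :
  (3 <= m)%N -> heat_solution Lam u -> 0 < C -> 0 < nu -> nu < m%:R - 2 ->
  (forall y tau, y != 0 -> tau < Lam -> `|u y tau| <= C * enorm y `^ (- nu)) ->
  (sg = 1 \/ sg = -1) -> x != 0 -> t < Lam -> sg * u x t <= 0.
Proof.
move=> m3 Hh C0 nu0 num Hu Hsg x0 tL.
have rx := rho_gt0 x0.
pose p := 2^-1 * - nu.
have hb y tau : y != 0 -> tau < Lam -> sg * u y tau <= C * rho y `^ p.
  move=> y0 tauL; rewrite -enorm_powR; apply: le_trans (Hu y tau y0 tauL).
  by case: Hsg => ->; rewrite ?mul1r ?mulN1r ?ler_norm // -normrN ler_norm.
have m3' : 3 <= m%:R :> R by rewrite (ler_nat R 3 m).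
rewrite leNgt; apply/negP => pos.
pose dl := sg * u x t / 8.
have dl0 : 0 < dl by rewrite divr_gt0.
pose K := 2 * m%:R - 4 - 2 * nu.
have K0 : 0 < K by rewrite /K; lra.
pose qe : R := 2^-1 * (2 - m%:R).
have p0 : p < 0 by rewrite /p; lra.
have q0 : qe <= 0 by rewrite /qe; lra.
pose S0 := (dl / C) `^ p^-1.
have S00 : 0 < S0 by rewrite powR_gt0 // divr_gt0.
have S0p : S0 `^ p = dl / C by rewrite powR_inv_pow ?divr_gt0 // ltr0_neq0.
pose t0 := t - (S0 / K + 1).
have SK : 0 < S0 / K by rewrite divr_gt0.
have t0t : t0 < t by rewrite /t0; lra.
pose R2 := S0 + rho x + 1.
pose M := C * R2 `^ p.
have rqp : 0 < rho x `^ qe by rewrite powR_gt0.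
pose B := dl / rho x `^ qe.
have B0 : 0 < B by rewrite divr_gt0.
pose w := p - qe.
have w0 : 0 < w by rewrite /w /p /qe; lra.
pose r2 := Num.min (rho x / 2) ((B / C) `^ w^-1).
have r20 : 0 < r2 by rewrite lt_min divr_gt0 //= powR_gt0 // divr_gt0.
have r2m : r2 <= rho x / 2 by rewrite ge_min lexx.
have r2w : r2 <= (B / C) `^ w^-1 by rewrite ge_min lexx orbT.
have r2x : r2 < rho x by move: r2m rx; lra.
pose eta := dl / (t - t0).
have eta0 : 0 < eta by rewrite divr_gt0 // subr_gt0.
have HW := @maxprin R m Lam u sg C p K t0 B qe M eta r2 R2 t Hh (ltW C0) (ltW p0) (ltW K0)
  ltac:(rewrite /K /p; lra) (ltW B0) q0 ltac:(rewrite /qe; lra) eta0 r20 tL.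
have Hbd : forall y tau, r2 <= rho y -> rho y <= R2 -> t0 <= tau -> tau <= t ->
     (rho y = r2 \/ rho y = R2 \/ tau = t0) -> sg * u y tau <= Wb C p K t0 B qe M eta y tau.
  move=> y tau y1 y2 t1' t2' hcase.
  have ry0 : 0 < rho y by apply: lt_le_trans y1.
  have y0 : y != 0 by apply/eqP => E; move: ry0; rewrite E rho0 ltxx.
  have tauL : tau < Lam by apply: le_lt_trans tL.
  have hy := hb y tau y0 tauL.
  have T1 : 0 <= C * (rho y + K * (tau - t0)) `^ p by rewrite mulr_ge0 ?powR_ge0 // ltW.
  have T2 : 0 <= B * rho y `^ qe by rewrite mulr_ge0 ?powR_ge0 // ltW.
  have T3 : 0 <= M by rewrite mulr_ge0 ?powR_ge0 // ltW.
  have T4 : 0 <= eta * (tau - t0) by rewrite mulr_ge0 ?subr_ge0 // ltW.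
  rewrite /Wb; case: hcase => [E|[E|E]].
  - have : C * rho y `^ p <= B * rho y `^ qe.
      rewrite E.
      have -> : p = qe + w by rewrite /w; ring.
      rewrite powRD; last by apply/implyP => _; rewrite gt_eqF.
      have hw : r2 `^ w <= B / C.
        have nn1 : r2 \in Num.nneg by rewrite nnegrE ltW.
        have nn2 : (B / C) `^ w^-1 \in Num.nneg by rewrite nnegrE powR_ge0.
        have := ge0_ler_powR (ltW w0) nn1 nn2 r2w.
        by rewrite powR_inv_pow ?divr_gt0 ?(lt0r_neq0 w0).
      have hw' : C * r2 `^ w <= B by rewrite -ler_pdivlMl // mulrC.
      have a0 : 0 <= r2 `^ qe by apply: powR_ge0.
      rewrite mulrCA mulrC; exact: ler_wpM2r.
    move: hy T1 T3 T4; lra.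
  - have : C * rho y `^ p = M by rewrite /M E.
    move: hy T1 T2 T4; lra.
  - move: T1; rewrite E subrr mulr0 addr0 => T1'.
    move: hy T2 T3 T4; rewrite E subrr mulr0; lra.
have := HW Hbd x t (ltW r2x) ltac:(rewrite /R2; move: S00; lra) (ltW t0t) (lexx t).
rewrite /Wb.
have E1 : K * (t - t0) = S0 + K by rewrite /t0; field; exact: lt0r_neq0.
have W1 : C * (rho x + K * (t - t0)) `^ p <= dl.
  rewrite E1; apply: le_trans (_ : C * S0 `^ p <= dl).
    apply: ler_wpM2l; first exact: ltW.
    by apply: powR_anti => //; [exact: ltW | move: rx K0; lra].
  by rewrite S0p mulrC divfK // gt_eqF.
have W2' : B * rho x `^ qe = dl by rewrite /B divfK // gt_eqF.
have W3 : M <= dl.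
  rewrite /M; apply: le_trans (_ : C * S0 `^ p <= dl).
    apply: ler_wpM2l; first exact: ltW.
    by apply: powR_anti => //; [exact: ltW | rewrite /R2; move: rx; lra].
  by rewrite S0p mulrC divfK // gt_eqF.
have W4 : eta * (t - t0) = dl by rewrite /eta divfK // gt_eqF // subr_gt0.
move: W1 W3 W2' W4 pos; rewrite /dl; lra.
Qed.

Local Close Scope classical_set_scope.
Unset Implicit Arguments.

Theorem proposition6p4 (R : realType) (m : nat) (Lam : R)
  (u : 'rV[R]_m -> R -> R) (C nu : R) :
  (3 <= m)%N ->
  heat_solution Lam u ->
  0 < C -> 0 < nu -> nu < m%:R - 2 ->
  (forall x t, x != 0 -> t < Lam -> `|u x t| <= C * enorm x `^ (- nu)) ->
  (forall x t, x != 0 -> t < Lam -> grad_norm u x t <= C * enorm x `^ (- nu - 1)) ->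
  (forall x t, x != 0 -> t < Lam -> hess_norm u x t <= C * enorm x `^ (- nu - 2)) ->
  forall x t, x != 0 -> t < Lam -> u x t = 0.
Proof.
move=> m3 Hh C0 nu0 num Hu _ _ x t x0 tL.
have h1 := @sg_bound R m Lam u C nu 1 x t m3 Hh C0 nu0 num Hu (or_introl erefl) x0 tL.
have h2 := @sg_bound R m Lam u C nu (-1) x t m3 Hh C0 nu0 num Hu (or_intror erefl) x0 tL.
rewrite mul1r in h1; rewrite mulN1r oppr_le0 in h2.
by apply/eqP; rewrite eq_le h1 h2.
Qed.
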